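(* Let $m\ge1$ and let $X_1,\dots,X_m$ be independent random variables, $X_i$ geometric with success probability $p_i\in(0,1]$. Let $Y_1,\dots,Y_m$ be i.i.d. geometric random variables with success probability $\bar p=\frac1m\sum_{i=1}^mp_i$, independent of $X_1,\dots,X_m$. Then for every positive integer $j$, $$\mathbb{P}\Big(\sum_{i=1}^mX_i\ge j\Big)\ge\mathbb{P}\Big(\sum_{i=1}^mY_i\ge j\Big).$$
   Context: A random variable $Y$ is geometric with success probability $p$ if $\mathbb{P}(Y=s)=(1-p)^{s-1}p$ for $s=1,2,\dots$. *)

(* Defs.v *)
From HB Require Import structures.
From mathcomp Require Import all_boot all_order all_algebra.
Set Implicit Arguments. Unset Strict Implicit. Unset Printing Implicit Defensive.
Import Order.TTheory GRing.Theory Num.Theory.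
Local Open Scope ring_scope.

Definition geom_pmf {R : realFieldType} (p : R) (s : nat) : R :=
  if (0 < s)%N then (1 - p) ^+ s.-1 * p else 0.

(* Each s_i <= k, so s ranges over
   finite functions 'I_m -> 'I_(k+1). *)
Definition sum_geom_pmf {R : realFieldType} (m : nat) (p : 'I_m -> R) (k : nat) : R :=
  \sum_(s : {ffun 'I_m -> 'I_k.+1} | (\sum_(i < m) (s i : nat))%N == k)
     \prod_(i < m) geom_pmf (p i) (s i).

Definition sum_geom_tail {R : realFieldType} (m : nat) (p : 'I_m -> R) (j : nat) : R :=
  1 - \sum_(k < j) sum_geom_pmf p k.

(* Main.v *)
Require Import Defs.
From HB Require Import structures.
From mathcomp Require Import all_boot all_order all_algebra.
From mathcomp Require Import ring lra.
Import Order.TTheory GRing.Theory Num.Theory.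
Local Open Scope ring_scope.



Definition eqm {R : realFieldType} n (P Q : {poly R}) := exists S, P = Q + 'X^n * S.
Definition nn {R : realFieldType} (P : {poly R}) := forall k, 0 <= P`_k.
Definition GG {R : realFieldType} n (q : R) : {poly R} :=
  \sum_(0 <= k < n) (q ^+ k)%:P * 'X^k.
Definition gp {R : realFieldType} n (p : R) : {poly R} :=
  \sum_(0 <= s < n) (geom_pmf p s)%:P * 'X^s.

Lemma eqm_refl {R : realFieldType} n (P : {poly R}) : eqm n P P.
Proof. by exists 0; rewrite mulr0 addr0. Qed.
Lemma eqm_sym {R : realFieldType} n (P Q : {poly R}) : eqm n P Q -> eqm n Q P.
Proof. by case=> S ->; exists (- S); ring. Qed.
Lemma eqm_trans {R : realFieldType} n (P Q T : {poly R}) :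
  eqm n P Q -> eqm n Q T -> eqm n P T.
Proof. by case=> S -> [S' ->]; exists (S + S'); ring. Qed.
Lemma eqmD {R : realFieldType} n (P Q P' Q' : {poly R}) :
  eqm n P Q -> eqm n P' Q' -> eqm n (P + P') (Q + Q').
Proof. by case=> S -> [S' ->]; exists (S + S'); ring. Qed.
Lemma eqmB {R : realFieldType} n (P Q P' Q' : {poly R}) :
  eqm n P Q -> eqm n P' Q' -> eqm n (P - P') (Q - Q').
Proof. by case=> S -> [S' ->]; exists (S - S'); ring. Qed.
Lemma eqmM {R : realFieldType} n (P Q P' Q' : {poly R}) :
  eqm n P Q -> eqm n P' Q' -> eqm n (P * P') (Q * Q').
Proof. by case=> S -> [S' ->]; exists (S * Q' + Q * S' + 'X^n * S * S'); ring. Qed.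
Lemma eqm_coef {R : realFieldType} n (P Q : {poly R}) k :
  eqm n P Q -> (k < n)%N -> P`_k = Q`_k.
Proof. by case=> S -> kn; rewrite coefD coefXnM kn addr0. Qed.

Lemma GS {R : realFieldType} n (q : R) : GG n.+1 q = GG n q + (q ^+ n)%:P * 'X^n.
Proof. by rewrite /GG big_nat_recr. Qed.
Lemma G0 {R : realFieldType} (q : R) : GG 0 q = 0.
Proof. by rewrite /GG big_geq. Qed.

Lemma G_mul {R : realFieldType} n (q : R) :
  GG n q * (1 - q%:P * 'X) = 1 - (q ^+ n)%:P * 'X^n.
Proof.
elim: n => [|n IH]; first by rewrite G0 expr0 mul0r polyC1 expr0 mulr1 subrr.
rewrite GS mulrDl IH exprSr polyCM exprSr; ring.
Qed.

Lemma eqm_G {R : realFieldType} n (q : R) : eqm n (GG n q * (1 - q%:P * 'X)) 1.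
Proof. by rewrite G_mul; exists (- (q ^+ n)%:P); ring. Qed.

Lemma gpS {R : realFieldType} n (p : R) : gp n.+1 p = gp n p + (geom_pmf p n)%:P * 'X^n.
Proof. by rewrite /gp big_nat_recr. Qed.

Lemma gp_G {R : realFieldType} n (p : R) : gp n.+1 p = p%:P * 'X * GG n (1 - p).
Proof.
elim: n => [|n IH].
  by rewrite gpS /gp big_geq // G0 /geom_pmf /= mulr0 add0r polyC0 mul0r.
rewrite gpS IH GS /geom_pmf /= polyCM exprS; ring.
Qed.

Lemma eqm_gp {R : realFieldType} n (p : R) :
  eqm n (gp n p * (1 - (1 - p)%:P * 'X)) (p%:P * 'X).
Proof.
case: n => [|n]; first by exists (gp 0 p * (1 - (1 - p)%:P * 'X) - p%:P * 'X); rewrite expr0; ring.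
rewrite gp_G -mulrA G_mul; exists (- (p * (1 - p) ^+ n)%:P).
rewrite polyCM exprS; ring.
Qed.
Arguments eqm_sym {R n P Q}.
Arguments eqm_trans {R n P Q T}.
Arguments eqmD {R n P Q P' Q'}.
Arguments eqmB {R n P Q P' Q'}.
Arguments eqmM {R n P Q P' Q'}.



Lemma nnD {R : realFieldType} (P Q : {poly R}) : nn P -> nn Q -> nn (P + Q).
Proof. by move=> hP hQ k; rewrite coefD addr_ge0. Qed.
Lemma nnM {R : realFieldType} (P Q : {poly R}) : nn P -> nn Q -> nn (P * Q).
Proof. by move=> hP hQ k; rewrite coefM; apply: sumr_ge0 => i _; rewrite mulr_ge0. Qed.
Lemma nnCX {R : realFieldType} (c : R) n : 0 <= c -> nn (c%:P * 'X^n).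
Proof. by move=> hc k; rewrite coefCM coefXn mulr_ge0 // ler0n. Qed.
Lemma nnC {R : realFieldType} (c : R) : 0 <= c -> nn c%:P.
Proof. by move=> hc k; rewrite coefC; case: eqP. Qed.
Lemma nnX {R : realFieldType} : nn ('X : {poly R}).
Proof. by move=> k; rewrite coefX ler0n. Qed.
Lemma nnXn {R : realFieldType} n : nn ('X^n : {poly R}).
Proof. by move=> k; rewrite coefXn ler0n. Qed.
Lemma nn1 {R : realFieldType} : nn (1 : {poly R}).
Proof. by rewrite -polyC1; apply: nnC. Qed.
Lemma nn0 {R : realFieldType} : nn (0 : {poly R}).
Proof. by move=> k; rewrite coef0. Qed.
Lemma nnG {R : realFieldType} n (q : R) : 0 <= q -> nn (GG n q).
Proof.
move=> hq; rewrite /GG; apply: (big_ind (@nn R)); [exact: nn0|exact: nnD|].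
by move=> i _; apply: nnCX; rewrite exprn_ge0.
Qed.
Lemma nngp {R : realFieldType} n (p : R) : 0 <= p <= 1 -> nn (gp n p).
Proof.
move=> /andP[h0 h1]; rewrite /gp; apply: (big_ind (@nn R)); [exact: nn0|exact: nnD|].
move=> i _; apply: nnCX; rewrite /geom_pmf; case: ifP => // _.
by rewrite mulr_ge0 // exprn_ge0 // subr_ge0.
Qed.

Lemma eqm_eq {R : realFieldType} n (P Q : {poly R}) : P = Q -> eqm n P Q.
Proof. by move=> ->; apply: eqm_refl. Qed.

Definition Dom {R : realFieldType} n (A B : {poly R}) :=
  exists W, nn W /\ eqm n ((B - A) * GG n 1) W.

Lemma Dom_refl {R : realFieldType} n (A : {poly R}) : Dom n A A.
Proof. exists 0; split; first exact: nn0. by rewrite subrr mul0r; apply: eqm_refl. Qed.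
Lemma Dom_trans {R : realFieldType} n (A B C : {poly R}) :
  Dom n A B -> Dom n B C -> Dom n A C.
Proof.
case=> W1 [h1 e1] [W2 [h2 e2]]; exists (W2 + W1); split; first exact: nnD.
have -> : (C - A) * GG n 1 = (C - B) * GG n 1 + (B - A) * GG n 1 by ring.
exact: eqmD.
Qed.
Lemma Dom_mull {R : realFieldType} n (C A B : {poly R}) :
  nn C -> Dom n A B -> Dom n (C * A) (C * B).
Proof.
move=> hC [W [h e]]; exists (C * W); split; first exact: nnM.
have -> : (C * B - C * A) * GG n 1 = C * ((B - A) * GG n 1) by ring.
exact: eqmM (eqm_refl _ _) e.
Qed.

Lemma Dom_pair {R : realFieldType} n (p1 p2 a b : R) :
  0 <= p1 <= 1 -> 0 <= p2 <= 1 -> 0 <= a <= 1 -> 0 <= b <= 1 ->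
  a + b = p1 + p2 -> p1 * p2 <= a * b ->
  Dom n (gp n p1 * gp n p2) (gp n a * gp n b).
Proof.
move=> /andP[h10 h11] /andP[h20 h21] /andP[ha0 ha1] /andP[hb0 hb1] hs hprod.
set E1 := 1 - (1 - p1)%:P * 'X; set E2 := 1 - (1 - p2)%:P * 'X.
set Ea := 1 - (1 - a)%:P * 'X; set Eb := 1 - (1 - b)%:P * 'X.
set E0 : {poly R} := 1 - (1 : R)%:P * 'X.
set G1 := GG n (1 - p1); set G2 := GG n (1 - p2).
set Ga := GG n (1 - a); set Gb := GG n (1 - b); set O := GG n (1 : R).
set W := ((a * b - p1 * p2)%:P) * 'X^2 * (1 + p2%:P * 'X * G1) * G2 * Ga * Gb.
exists W; split.
  rewrite /W; repeat apply: nnM; try (apply: nnG; lra).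
  all: try first [ (apply: nnC; lra) | exact: nnX | exact: nnXn |
     (apply: nnD; [exact: nn1| repeat apply: nnM; first [(apply: nnC; lra) | exact: nnX | (apply: nnG; lra)]]) ].
set L := (gp n a * gp n b - gp n p1 * gp n p2) * O.
set E := E1 * E2 * Ea * Eb * E0.
set K := G1 * G2 * Ga * Gb * O.
set M := (a%:P * 'X) * (b%:P * 'X) * E1 * E2 - (p1%:P * 'X) * (p2%:P * 'X) * Ea * Eb.
have EK : eqm n (E * K) 1.
  have -> : E * K = (G1 * E1) * (G2 * E2) * (Ga * Ea) * (Gb * Eb) * (O * E0) by rewrite /E /K; ring.
  apply: (@eqm_trans _ _ _ (1 * 1 * 1 * 1 * 1)); last by apply: eqm_eq; ring.
   rewrite /G1 /G2 /Ga /Gb /O /E1 /E2 /Ea /Eb /E0. by repeat apply: eqmM; apply: eqm_G.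
have LE : eqm n (L * E) M.
  have -> : L * E = (gp n a * Ea) * (gp n b * Eb) * E1 * E2 * (O * E0)
       - (gp n p1 * E1) * (gp n p2 * E2) * Ea * Eb * (O * E0) by rewrite /L /E; ring.
  have -> : M = (a%:P * 'X) * (b%:P * 'X) * E1 * E2 * 1 - (p1%:P * 'X) * (p2%:P * 'X) * Ea * Eb * 1 by rewrite /M; ring.
   rewrite /G1 /G2 /Ga /Gb /O /E1 /E2 /Ea /Eb /E0.
  by apply: eqmB; (apply: eqmM; [apply: eqmM; [apply: eqmM; [apply: eqmM; [exact: eqm_gp|exact: eqm_gp]|exact: eqm_refl]|exact: eqm_refl]|exact: eqm_G]).
have WE : eqm n (W * E) M.
  have -> : W * E = (a * b - p1 * p2)%:P * 'X^2 * (E1 + p2%:P * 'X * (G1 * E1))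
      * (G2 * E2) * (Ga * Ea) * (Gb * Eb) * E0 by rewrite /W /E; ring.
  apply: (@eqm_trans _ _ _ ((a * b - p1 * p2)%:P * 'X^2 * (E1 + p2%:P * 'X * 1) * 1 * 1 * 1 * E0)).
     rewrite /G1 /G2 /Ga /Gb /O /E1 /E2 /Ea /Eb /E0.
    apply: eqmM; [apply: eqmM; [apply: eqmM; [apply: eqmM; [apply: eqmM; [exact: eqm_refl | apply: eqmD; [exact: eqm_refl| apply: eqmM; [exact: eqm_refl|exact: eqm_G]]] | exact: eqm_G] | exact: eqm_G] | exact: eqm_G] | exact: eqm_refl].
  have hb : b = p1 + p2 - a by lra.
  rewrite /M /E1 /E2 /Ea /Eb /E0 hb !polyCB !polyCD !polyCM polyC1.
  by apply: eqm_eq; ring.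
have h1 : eqm n L (L * (E * K)).
  by apply: eqm_sym; rewrite -[X in eqm _ _ X]mulr1; apply: eqmM (eqm_refl _ _) EK.
apply: (eqm_trans h1); rewrite mulrA.
apply: (eqm_trans (eqmM LE (eqm_refl _ K))).
apply: (eqm_trans (eqmM (eqm_sym WE) (eqm_refl _ K))).
by rewrite -mulrA -[X in eqm _ _ X]mulr1; apply: eqmM (eqm_refl _ _) EK.
Qed.



Arguments Dom_mull {R n C A B}.
Arguments Dom_trans {R n A B C}.

Definition Fl {R : realFieldType} n (l : seq R) := \prod_(x <- l) gp n x.

Lemma sum_const_seq {R : realFieldType} (l : seq R) (c : R) :
  \sum_(x <- l) c = (size l)%:R * c.
Proof.
elim: l => [|x l IH]; first by rewrite big_nil mul0r.
by rewrite big_cons IH /= mulrS mulrDl mul1r.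
Qed.

Lemma ex_le {R : realFieldType} (l : seq R) pb : l != [::] ->
  \sum_(x <- l) x <= (size l)%:R * pb -> exists2 x, x \in l & x <= pb.
Proof.
elim: l => [|x l IH] //= _; rewrite big_cons mulrSr mulrDl mul1r.
case: (lerP x pb) => hx; first by exists x => //; rewrite inE eqxx.
case: l IH => [|y l] IH.
  by rewrite big_nil /= => h; exfalso; lra.
move=> h; have [|z zl hz] := IH isT.
  move: h; move: (\sum_(i <- y :: l) i) ((size (y :: l))%:R * pb) => S T h; lra.
by exists z => //; rewrite inE zl orbT.
Qed.

Lemma ex_ge {R : realFieldType} (l : seq R) pb : l != [::] ->
  (size l)%:R * pb <= \sum_(x <- l) x -> exists2 x, x \in l & pb <= x.
Proof.
elim: l => [|x l IH] //= _; rewrite big_cons mulrSr mulrDl mul1r.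
case: (lerP pb x) => hx; first by exists x => //; rewrite inE eqxx.
case: l IH => [|y l] IH.
  by rewrite big_nil /= => h; exfalso; lra.
move=> h; have [|z zl hz] := IH isT.
  move: h; move: (\sum_(i <- y :: l) i) ((size (y :: l))%:R * pb) => S T h; lra.
by exists z => //; rewrite inE zl orbT.
Qed.

Lemma nnFl {R : realFieldType} n (l : seq R) :
  (forall x, x \in l -> 0 <= x <= 1) -> nn (Fl n l).
Proof.
move=> hl; rewrite /Fl big_seq; apply: (big_ind (@nn R)); [exact: nn1|exact: nnM|].
by move=> x xl; apply: nngp; apply: hl.
Qed.

Lemma main_list {R : realFieldType} n k : forall (l : seq R) pb, size l = k ->
  (forall x, x \in l -> 0 <= x <= 1) -> \sum_(x <- l) x = k%:R * pb ->
  Dom n (Fl n l) (Fl n (nseq k pb)).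
Proof.
elim: k => [|k IH] l pb hs hl hsum.
  by move/size0nil: hs => ->; apply: Dom_refl.
have l0 : l != [::] by rewrite -size_eq0 hs.
have [x xl xle] : exists2 x, x \in l & x <= pb.
  by apply: ex_le l0 _; rewrite hsum hs.
have pl := perm_to_rem xl.
set l1 := rem x l.
have s1 : size l1 = k by rewrite size_rem // hs.
have sum1 : \sum_(z <- l) z = x + \sum_(z <- l1) z by rewrite (perm_big _ pl) big_cons.
have F1 : Fl n l = gp n x * Fl n l1 by rewrite /Fl (perm_big _ pl) big_cons.
have hx := hl x xl.
have hl1 : forall z, z \in l1 -> 0 <= z <= 1 by move=> z zl; apply: hl; apply: mem_rem zl.
case: k IH hs hsum s1 => [|k] IH hs hsum s1.
  move/size0nil: s1 => e1.
  have xe : x = pb by move: hsum; rewrite sum1 e1 big_nil addr0 mul1r.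
  by rewrite F1 e1 xe /Fl /= big_cons; apply: Dom_refl.
have l10 : l1 != [::] by rewrite -size_eq0 s1.
have [y yl yge] : exists2 y, y \in l1 & pb <= y.
  apply: ex_ge l10 _; rewrite s1.
  move: hsum; rewrite sum1 (mulrSr (1 : R) k.+1) mulrDl mul1r.
  move: (\sum_(z <- l1) z) (k.+1%:R * pb) => S T h; lra.
have pl1 := perm_to_rem yl.
set l2 := rem y l1.
have s2 : size l2 = k by rewrite size_rem // s1.
have sum2 : \sum_(z <- l1) z = y + \sum_(z <- l2) z by rewrite (perm_big _ pl1) big_cons.
have F2 : Fl n l1 = gp n y * Fl n l2 by rewrite /Fl (perm_big _ pl1) big_cons.
have hy := hl1 y yl.
have hl2 : forall z, z \in l2 -> 0 <= z <= 1 by move=> z zl; apply: hl1; apply: mem_rem zl.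
set w := x + y - pb.
have hIH : Dom n (Fl n (w :: l2)) (Fl n (nseq k.+1 pb)).
  apply: IH => //; first by rewrite /= s2.
    move=> z; rewrite inE => /orP[/eqP ->|]; last exact: hl2.
    rewrite /w; lra.
  rewrite big_cons; move: hsum; rewrite sum1 sum2 (mulrSr (1 : R) k.+1) mulrDl mul1r /w.
  move: (\sum_(z <- l2) z) (k.+1%:R * pb) => S T h; lra.
have -> : Fl n (nseq k.+2 pb) = gp n pb * Fl n (nseq k.+1 pb) by rewrite /Fl /= big_cons.
case/andP: hx => hx0 hx1; case/andP: hy => hy0 hy1.
have hpb : 0 <= pb <= 1 by apply/andP; split; lra.
have h1 := Dom_mull (nngp n pb hpb) hIH.
have hpair : Dom n (gp n x * gp n y) (gp n pb * gp n w).
  apply: Dom_pair => //; rewrite /w; try (apply/andP; split); try lra.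
  have : 0 <= (pb - x) * (y - pb) by apply: mulr_ge0; lra.
  lra.
have h2 := Dom_mull (nnFl n l2 hl2) hpair.
apply: Dom_trans _ h1.
  rewrite F1 F2 /Fl big_cons.
  rewrite -/(Fl n l2).
  have -> : gp n x * (gp n y * Fl n l2) = Fl n l2 * (gp n x * gp n y) by ring.
  have -> : gp n pb * (gp n w * Fl n l2) = Fl n l2 * (gp n pb * gp n w) by ring.
  exact: h2.
Qed.



Lemma coefG {R : realFieldType} n (q : R) i :
  (GG n q)`_i = if (i < n)%N then q ^+ i else 0.
Proof.
elim: n => [|n IH]; first by rewrite G0 coef0.
rewrite GS coefD IH coefCM coefXn.
case: (ltngtP i n) => [h|h|->].
- by rewrite (leqW h) mulr0 addr0.
- by rewrite ltnS leqNgt h /= mulr0 addr0.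
- by rewrite ltnSn mulr1 add0r.
Qed.

Lemma Dom_coef {R : realFieldType} n (A B : {poly R}) r :
  Dom n A B -> (r < n)%N -> \sum_(k < r.+1) A`_k <= \sum_(k < r.+1) B`_k.
Proof.
case=> W [hW e] rn; have := eqm_coef _ _ _ _ e rn; rewrite coefM.
under eq_bigr => k _ do rewrite coefG (leq_ltn_trans (leq_subr _ _) rn) expr1n mulr1 coefB.
rewrite sumrB => h; rewrite -subr_ge0 h; exact: hW.
Qed.

Lemma eqm_trunc {R : realFieldType} d n (p : R) : (d <= n)%N -> eqm d (gp n p) (gp d p).
Proof.
move=> dn; rewrite /gp (@big_cat_nat _ _ _ d 0 n _ _ (leq0n d) dn) /=.
exists (\sum_(d <= s < n) (geom_pmf p s)%:P * 'X^(s - d)).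
congr (_ + _); rewrite mulr_sumr; apply: eq_big_nat => s /andP[ds _].
by rewrite mulrCA -exprD subnKC.
Qed.

Lemma coef_prod {R : realFieldType} m (p : 'I_m -> R) k :
  (\prod_(i < m) gp k.+1 (p i))`_k = sum_geom_pmf p k.
Proof.
rewrite /gp; under eq_bigr => i _ do rewrite big_mkord.
rewrite bigA_distr_bigA /= coef_sum /sum_geom_pmf [RHS]big_mkcond /=.
apply: eq_bigr => f _.
rewrite big_split /= -rmorph_prod prodrXr coefCM coefXn eq_sym.
by case: eqP; rewrite ?mulr1 ?mulr0.
Qed.



Lemma map_const_nseq {T U : Type} (s : seq T) (c : U) : map (fun _ => c) s = nseq (size s) c.
Proof. by elim: s => //= x s ->. Qed.

Lemma key_coef {R : realFieldType} m (q : 'I_m -> R) j k : (k < j)%N ->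
  sum_geom_pmf q k = (Fl j (map q (index_enum 'I_m)))`_k.
Proof.
move=> kj; rewrite -coef_prod /Fl big_map; apply: esym.
apply: (eqm_coef _ _ _ _ _ (ltnSn k)).
apply: (big_ind2 (eqm k.+1)); [exact: eqm_refl | by move=> ? ? ? ? ? ?; apply: eqmM |].
by move=> i _; apply: eqm_trunc.
Qed.

Theorem corollaryB5 (R : realFieldType) (m : nat) (p : 'I_m -> R)
  (hm : (1 <= m)%N) (hp : forall i, 0 < p i <= 1) (j : nat) (hj : (0 < j)%N) :
  sum_geom_tail p j >=
  sum_geom_tail (fun _ : 'I_m => (\sum_(i < m) p i) / m%:R) j.
Proof.
set pb := (\sum_(i < m) p i) / m%:R.
have sz : size (index_enum 'I_m) = m.
  by rewrite -[index_enum _](filter_predT) deprecated_filter_index_enum -cardE card_ord.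
have hd : Dom j (Fl j (map p (index_enum 'I_m))) (Fl j (nseq m pb)).
  apply: main_list; first by rewrite size_map sz.
    move=> x /mapP[i _ ->]; case/andP: (hp i) => h0 h1; rewrite h1 andbT; exact: ltW.
  rewrite big_map /pb mulrC divfK //; by rewrite pnatr_eq0 -lt0n.
rewrite /sum_geom_tail.
under eq_bigr => k _ do rewrite (key_coef _ _ _ _ (ltn_ord k)).
under [X in _ <= 1 - X]eq_bigr => k _ do rewrite (key_coef _ _ _ _ (ltn_ord k)).
rewrite map_const_nseq sz.
have hjj : (j.-1 < j)%N by rewrite ltn_predL.
have := Dom_coef _ _ _ _ hd hjj.
rewrite prednK //.
move: (\sum_(k < j) _) (\sum_(k < j) _) => a b h; lra.
Qed.
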